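(* Let $t\ge2$, $n_1,\dots,n_t\ge1$, $n=n_1+\dots+n_t$, and let $G=K_{n_1,\dots,n_t}$ be the complete multipartite graph with partite sets $Y_1,\dots,Y_t$, $|Y_i|=n_i$. Then the inclusion-minimal skew forcing sets of $G$ are exactly the sets $V(G)\setminus\{u,v\}$ with $u,v$ in different partite sets; these are exactly the vertices of $\mathfrak{Z}^-(G)$ of cardinality $n-2$, and each has degree $2$ in $\mathfrak{Z}^-(G)$. Every set $V(G)\setminus\{y\}$ with $y\in Y_i$ is a skew forcing set and has degree $n-n_i+1$ in $\mathfrak{Z}^-(G)$. Moreover $\mathfrak{Z}^-(G)$ is unique: if $G'$ is a graph with no isolated vertices and $\mathfrak{Z}^-(G')\cong\mathfrak{Z}^-(G)$, then $G'\cong G$.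
   Context: All graphs are finite, simple, undirected. Skew color change rule: with $W$ the set of white (non-blue) vertices, any vertex $u$ (blue or white) may color a white vertex $w$ blue if $N(u)\cap W=\{w\}$. $S$ is a skew forcing set if starting with exactly $S$ blue and applying the rule repeatedly, all vertices become blue. The skew TAR graph $\mathfrak{Z}^-(G)$ has as vertices the skew forcing sets of $G$, with $S_1S_2$ an edge iff $|S_1\ominus S_2|=1$ (symmetric difference). A complete multipartite graph $K_{n_1,\dots,n_t}$ has vertex set partitioned into sets of sizes $n_1,\dots,n_t$, with exactly the edges between vertices in distinct parts. *)

(* Defs.v *)
From mathcomp Require Import all_boot.
Set Implicit Arguments. Unset Strict Implicit. Unset Printing Implicit Defensive.

(* A graph is a relation e on a finite type (simple: symmetric, irreflexive). *)
Section Skew.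
Variables (T : finType) (e : rel T).

Definition nbhd (x : T) : {set T} := [set y | e x y].

(* One application of the skew color change rule: with W = ~: B the white set,
   some vertex u (blue or white) has N(u) ∩ W = {w}, and w becomes blue. *)
Definition skew_step (B B' : {set T}) : bool :=
  [exists u, [exists w, (nbhd u :&: ~: B == [set w]) && (B' == w |: B)]].

Definition skew_forcing (S : {set T}) : bool := connect skew_step S setT.

Definition symdiff (A B : {set T}) : {set T} := (A :\: B) :|: (B :\: A).

Definition tar_vertices : {set {set T}} := [set S | skew_forcing S].
Definition tar_adj : rel {set T} := fun S1 S2 =>
  [&& skew_forcing S1, skew_forcing S2 & #|symdiff S1 S2| == 1].
Definition tar_deg (S : {set T}) : nat := #|[set S' | tar_adj S S']|.
End Skew.

Definition iso_on (U W : finType) (A : {set U}) (r : rel U)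
    (B : {set W}) (s : rel W) : Prop :=
  exists f : U -> W, [/\ {in A &, injective f}, f @: A = B &
    {in A &, forall x y, r x y = s (f x) (f y)}].

Definition graph_iso (U W : finType) (r : rel U) (s : rel W) : Prop :=
  iso_on [set: U] r [set: W] s.

Definition tar_iso (U W : finType) (r : rel U) (s : rel W) : Prop :=
  iso_on (tar_vertices r) (tar_adj r) (tar_vertices s) (tar_adj s).

(* Complete multipartite graph K_{n_0,...,n_{t-1}}: vertex (i, j) is the j-th
   vertex of partite set Y_i; edges exactly between distinct parts. *)
Definition kmp_vertex (t : nat) (n : 'I_t -> nat) : finType :=
  {i : 'I_t & 'I_(n i)}.
Definition kmp_adj (t : nat) (n : 'I_t -> nat) : rel (kmp_vertex n) :=
  fun x y => tag x != tag y.
Arguments kmp_vertex {t} n.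
Arguments kmp_adj {t} n.

(* Main.v *)
Require Import Defs.
From mathcomp Require Import all_boot zify.
Set Implicit Arguments. Unset Strict Implicit. Unset Printing Implicit Defensive.

Section SetFacts.
Variable T : finType.
Implicit Types A B X Y : {set T}.

Lemma symdiffC A B : symdiff (~: A) (~: B) = symdiff A B.
Proof. by apply/setP => x; rewrite !inE; case: (x \in A); case: (x \in B). Qed.

Lemma symdiff_sym A B : symdiff A B = symdiff B A.
Proof. by apply/setP => x; rewrite !inE; case: (x \in A); case: (x \in B). Qed.

Lemma symdiffK A B : symdiff A (symdiff A B) = B.
Proof. by apply/setP => x; rewrite !inE; case: (x \in A); case: (x \in B). Qed.

Lemma symdiff0 A : symdiff set0 A = A.
Proof. by apply/setP => x; rewrite !inE; case: (x \in A). Qed.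

Lemma symdiff_card X Y : #|symdiff X Y| == 1 ->
  #|X| = #|Y|.+1 \/ #|Y| = #|X|.+1.
Proof.
move=> H.
have h1 := cardsID Y X. have h2 := cardsID X Y.
have h3 := cardsUI (X :\: Y) (Y :\: X).
have e0 : (X :\: Y) :&: (Y :\: X) = set0.
  by apply/setP => x; rewrite !inE; case: (x \in X); case: (x \in Y).
rewrite e0 cards0 /= in h3.
rewrite setIC in h2.
move: H; rewrite /symdiff => /eqP H; lia.
Qed.

Lemma symdiff_sub X Y : #|symdiff X Y| == 1 -> #|X| < #|Y| -> X \subset Y.
Proof.
move=> /cards1P [w Hw] lt; apply/subsetP => a aX; apply/negPn/negP => aY.
have : a \in symdiff X Y by rewrite !inE aX aY.
rewrite Hw inE => /eqP ea; subst a.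
have sYX : Y \subset X.
  apply/subsetP => b bY; apply/negPn/negP => bX.
  have : b \in symdiff X Y by rewrite !inE bX bY orbT.
  by rewrite Hw inE => /eqP eb; subst b; rewrite bY in aY.
by have := subset_leq_card sYX; rewrite leqNgt lt.
Qed.

Lemma card_predC (p : pred {set T}) :
  #|[set S | p S]| = #|[set X | p (~: X)]|.
Proof.
have -> : [set S | p S] = (@setC T) @: [set X | p (~: X)].
  apply/setP => S; rewrite inE; apply/idP/imsetP => [pS|[X]].
    by exists (~: S); rewrite ?inE setCK.
  by rewrite inE => pX ->.
by rewrite card_imset //; apply: setC_inj.
Qed.

Lemma card_split (U : finType) (p q : pred U) :
  #|[set x | p x]| = #|[set x | p x && q x]| + #|[set x | p x && ~~ q x]|.
Proof.
rewrite -(cardsID [set x | q x] [set x | p x]).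
by f_equal; apply: eq_card => x; rewrite !inE // andbC.
Qed.

End SetFacts.

Ltac eqcase := repeat (match goal with
 | H : (?x == ?y) = false |- context [?x == ?y] => rewrite H
 | H : (?x == ?y) = false |- context [?y == ?x] => rewrite eq_sym H
 | |- context [?x == ?x] => rewrite eqxx
 | |- context [?x == ?y] => let E := fresh "E" in case: (x =P y) => [E|/eqP/negbTE ?]; [try rewrite E|]
 end); rewrite /= ?andbT ?andbF ?orbT ?orbF.

Section Graph.
Variables (T : finType) (e : rel T).
Hypotheses (esym : symmetric e) (eirr : irreflexive e)
  (enb : forall x, exists y, e x y).

Lemma forcingT : skew_forcing e setT.
Proof. exact: connect0. Qed.

Lemma forcing_step (B : {set T}) u w :
  nbhd e u :&: ~: B = [set w] -> skew_forcing e (w |: B) -> skew_forcing e B.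
Proof.
move=> H F; apply: connect_trans F; apply: connect1.
by apply/existsP; exists u; apply/existsP; exists w; rewrite H !eqxx.
Qed.

Lemma forcing1 y : skew_forcing e (~: [set y]).
Proof.
have [u eyu] := enb y.
apply: (@forcing_step _ u y).
  by rewrite setCK; apply/setP => x; rewrite !inE; eqcase; rewrite ?(esym u) ?eyu.
have -> : y |: ~: [set y] = setT. by apply/setP => x; rewrite !inE; eqcase.
exact: forcingT.
Qed.

Lemma forcing2 w a b : e w a -> ~~ e w b -> skew_forcing e (~: [set a; b]).
Proof.
move=> ewa newb.
have ab : (a == b) = false by apply/negbTE/eqP => ab; rewrite -ab ewa in newb.
apply: (@forcing_step _ w a).
  by rewrite setCK; apply/setP => x; rewrite !inE; eqcase; rewrite ?ewa ?(negbTE newb).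
have -> : a |: ~: [set a; b] = ~: [set b].
  by apply/setP => x; rewrite !inE; eqcase.
exact: forcing1.
Qed.

Lemma forcing3 z u v : e z u -> ~~ e z v -> ~~ e u v ->
  skew_forcing e (~: (z |: [set u; v])).
Proof.
move=> ezu nezv neuv.
have zu : (z == u) = false by apply/negbTE/eqP => zu; rewrite zu eirr in ezu.
have uv : (u == v) = false by apply/negbTE/eqP => uv; rewrite uv (negbTE nezv) in ezu.
have zv : (z == v) = false.
  by apply/negbTE/eqP => zv; rewrite zv esym (negbTE neuv) in ezu.
apply: (@forcing_step _ z u).
  by rewrite setCK; apply/setP => x; rewrite !inE; eqcase; rewrite ?eirr ?ezu ?(negbTE nezv).
have -> : u |: ~: (z |: [set u; v]) = ~: [set z; v].
  by apply/setP => x; rewrite !inE; eqcase.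
by apply: (@forcing2 u); rewrite // esym.
Qed.

End Graph.

Definition good (T : finType) (e : rel T) (X : {set T}) :=
  (#|X| <= 1) || ((#|X| == 2) &&
     [forall a, forall b, ((a \in X) && (b \in X) && (a != b)) ==> e a b]).

Section Cmp.
Variables (T : finType) (e : rel T).
Hypotheses (esym : symmetric e) (eirr : irreflexive e)
  (enb : forall x, exists y, e x y)
  (ntr : forall x y z, ~~ e x y -> ~~ e y z -> ~~ e x z).

Lemma good_forcing X : good e X -> skew_forcing e (~: X).
Proof.
case/orP.
  rewrite leq_eqVlt ltnS leqn0 => /orP [/cards1P [y ->]|/eqP/cards0_eq ->].
    exact: forcing1.
  by rewrite setC0; apply: forcingT.
case/andP => /cards2P [a [b [ab ->]]] /forallP /(_ a) /forallP /(_ b).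
rewrite !inE !eqxx ab !orbT /= => eab.
by apply: (@forcing2 _ _ esym enb b); rewrite ?eirr // esym eab.
Qed.

Lemma step_bad B B' : ~~ good e (~: B) -> skew_step e B B' -> ~~ good e (~: B').
Proof.
move=> nbB /existsP[u /existsP[w /andP[/eqP H /eqP ->]]].
have -> : ~: (w |: B) = ~: B :\ w by apply/setP => x; rewrite !inE negb_or andbC.
move: nbB H; set W := ~: B => nbB H.
have wW : w \in W.
  have : w \in [set w] by rewrite inE.
  by rewrite -H inE => /andP [].
have euw : e u w.
  have : w \in [set w] by rewrite inE.
  by rewrite -H !inE => /andP [].
have indep : forall x, x \in W :\ w -> ~~ e u x.
  move=> x; rewrite !inE => /andP [xw xW]; apply/negP => eux.
  have : x \in nbhd e u :&: W by rewrite !inE eux xW.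
  by rewrite H inE (negbTE xw).
have ind2 : forall a b, a \in W :\ w -> b \in W :\ w -> ~~ e a b.
  by move=> a b aW bW; apply: (ntr (y := u)); rewrite ?(esym a) indep.
have cW : #|W| = (#|W :\ w|).+1 by rewrite (cardsD1 w W) wW.
apply/negP; rewrite /good; case/orP.
  move=> le1; move: nbB; rewrite /good negb_or cW ltnS => /andP [gt1].
  have -> : #|W :\ w| = 1 by move: gt1 le1; rewrite -ltnNge; lia.
  move=> /= /forallPn [a /forallPn [b]]; rewrite negb_imply => /andP [/andP [/andP [aW bW] ab] neab].
  case: (a =P w) => [aw|/eqP aw].
    subst a; have bW' : b \in W :\ w by rewrite in_setD1 eq_sym ab bW.
    have nebw : ~~ e b w by rewrite esym.
    by have := ntr (indep b bW') nebw; rewrite euw.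
  case: (b =P w) => [bw|/eqP bw].
    subst b; have aW' : a \in W :\ w by rewrite in_setD1 aw aW.
    by have := ntr (indep a aW') neab; rewrite euw.
  have aW' : a \in W :\ w by rewrite in_setD1 aw aW.
  have bW' : b \in W :\ w by rewrite in_setD1 bw bW.
  have : [set a; b] \subset W :\ w by apply/subsetP => x; rewrite in_set2 => /orP [] /eqP ->.
  by move/subset_leq_card; rewrite cards2 ab; move: le1; lia.
case/andP => /cards2P [a [b [ab Hab]]] /forallP /(_ a) /forallP /(_ b).
rewrite Hab !inE !eqxx ab !orbT /= => eab.
have := ind2 a b; rewrite Hab !in_set2 !eqxx orbT => /(_ isT isT).
by rewrite eab.
Qed.

Lemma forcing_good_path (p : seq {set T}) B :
  path (skew_step e) B p -> ~~ good e (~: B) -> ~~ good e (~: last B p).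
Proof.
elim: p B => [|B1 p IH] B //= /andP [st pa] nb.
by apply: IH => //; apply: step_bad st.
Qed.

Lemma forcing_good S : skew_forcing e S = good e (~: S).
Proof.
apply/idP/idP => [|g]; last by rewrite -[S]setCK; apply: good_forcing.
case/connectP => p pa eT; apply/negPn/negP => nb.
have := forcing_good_path pa nb; rewrite -eT setCT.
by rewrite /good cards0.
Qed.

End Cmp.

Section CmpDeg.
Variables (T : finType) (e : rel T).
Hypotheses (esy : symmetric e) (eirr : irreflexive e)
  (enb : forall x, exists y, e x y)
  (ntr : forall x y z, ~~ e x y -> ~~ e y z -> ~~ e x z).

Let fg := forcing_good esy eirr enb ntr.

Lemma good_le2 X : good e X -> #|X| <= 2.
Proof. by case/orP => [h|/andP [/eqP -> _]] //; apply: leq_trans h _. Qed.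

Lemma good_pair X : good e X -> #|X| == 2 ->
  exists a b, [/\ e a b, a != b & X = [set a; b]].
Proof.
move=> /orP [h|/andP [_ /forallP H]] /cards2P [a [b [ab HX]]].
  by move: h; rewrite HX cards2 ab.
exists a, b; split => //.
by move: (H a) => /forallP /(_ b); rewrite HX !inE !eqxx ab !orbT.
Qed.

Lemma good2 a b : e a b -> good e [set a; b].
Proof.
move=> eab; have ab : a != b by apply/eqP => ab; rewrite ab eirr in eab.
apply/orP; right; rewrite cards2 ab eqxx /=.
apply/forallP => x; apply/forallP => y; rewrite !inE.
apply/implyP => /andP [/andP [/orP [] /eqP -> /orP [] /eqP ->]];
  by rewrite ?eqxx // ?eab // esy.
Qed.

Lemma good1 y : good e [set y].
Proof. by rewrite /good cards1. Qed.

Lemma good0 : good e set0.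
Proof. by rewrite /good cards0. Qed.

Lemma adjC X Y : tar_adj e (~: X) (~: Y) =
  [&& good e X, good e Y & (#|symdiff X Y| == 1)].
Proof. by rewrite /tar_adj !fg !setCK symdiffC. Qed.

Lemma deg_nb X : good e X ->
  tar_deg e (~: X) = #|[set Y | good e Y && (#|symdiff X Y| == 1)]|.
Proof.
move=> gX; rewrite /tar_deg card_predC; apply: eq_card => Y.
by rewrite !inE adjC gX.
Qed.

Lemma degT : tar_deg e setT = #|T|.
Proof.
rewrite -setC0 deg_nb ?good0 //.
have -> : [set Y | good e Y && (#|symdiff set0 Y| == 1)] = (@set1 T) @: setT.
  apply/setP => Y; rewrite inE symdiff0; apply/idP/imsetP.
    by case/andP => _ /cards1P [x ->]; exists x.
  by case=> x _ ->; rewrite good1 cards1.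
by rewrite card_imset ?cardsT //; apply: set1_inj.
Qed.

Lemma deg1 y : tar_deg e (~: [set y]) = (#|nbhd e y|).+1.
Proof.
rewrite deg_nb ?good1 //.
have -> : [set Y | good e Y && (#|symdiff [set y] Y| == 1)] =
    set0 |: [set [set y; u] | u in nbhd e y].
  apply/setP => Y; rewrite !inE; apply/idP/idP.
    case/andP => gY sd.
    case: (symdiff_card sd); rewrite cards1.
      by move=> /esym /eqP; rewrite eqSS => /eqP /cards0_eq ->; rewrite eqxx.
    move=> cY; have sub := symdiff_sub sd; rewrite cards1 cY in sub.
    have [a [b [eab ab HY]]] := good_pair gY (introT eqP cY).
    move: (sub isT); rewrite sub1set HY in_set2 => /orP [] /eqP ya; apply/orP; right;
      apply/imsetP.
      by exists b; [rewrite inE ya | rewrite ya].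
    by exists a; [rewrite inE ya esy | rewrite ya setUC].
  case/orP => [/eqP ->|/imsetP [u]].
    by rewrite good0 symdiff_sym symdiff0 cards1.
  rewrite inE => eyu ->; rewrite good2 //=.
  have yu : (y == u) = false by apply/negbTE/eqP => yu; rewrite yu eirr in eyu.
  have -> : symdiff [set y] [set y; u] = [set u].
    by apply/setP => x; rewrite !inE; eqcase.
  by rewrite cards1.
rewrite cardsU1 card_in_imset.
  have -> : set0 \notin [set [set y; u] | u in nbhd e y].
    apply/imsetP => [[u _ /setP /(_ y)]]; by rewrite !inE eqxx.
  by [].
move=> u u' /[!inE] eyu eyu' /setP /(_ u); rewrite !inE eqxx orbT.
have yu : (u == y) = false by apply/negbTE/eqP => yu; rewrite yu eirr in eyu.
by rewrite yu => /esym /eqP.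
Qed.

Lemma deg2 u v : e u v -> tar_deg e (~: [set u; v]) = 2.
Proof.
move=> euv; have uv : (u == v) = false by apply/negbTE/eqP => uv; rewrite uv eirr in euv.
rewrite deg_nb ?good2 //.
have -> : [set Y | good e Y && (#|symdiff [set u; v] Y| == 1)] =
    [set [set u]; [set v]].
  apply/setP => Y; rewrite !inE; apply/idP/idP.
    case/andP => gY sd; have := good_le2 gY.
    case: (symdiff_card sd); rewrite cards2 uv /=; last by lia.
    move=> cY _.
    have cY1 : #|Y| == 1 by apply/eqP; move: cY; lia.
    have sub : Y \subset [set u; v].
      by apply: symdiff_sub; [rewrite symdiff_sym | rewrite cards2 uv (eqP cY1)].
    have /cards1P [a HY] := cY1.
    move: sub; rewrite HY sub1set in_set2 => /orP [] /eqP ->; by rewrite eqxx ?orbT.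
  case/orP => /eqP ->; rewrite good1 /=.
    have -> : symdiff [set u; v] [set u] = [set v].
      by apply/setP => x; rewrite !inE; eqcase.
    by rewrite cards1.
  have -> : symdiff [set u; v] [set v] = [set u].
    by apply/setP => x; rewrite !inE; eqcase.
  by rewrite cards1.
rewrite cards2; suff -> : [set u] != [set v] by [].
by apply/eqP => /set1_inj /eqP; rewrite uv.
Qed.

End CmpDeg.

Lemma card_pt (U : finType) (b : pred U) x0 :
  #|[set x | b x && (x == x0)]| = b x0.
Proof.
case hb: (b x0) => /=.
  rewrite -(cards1 x0); apply: eq_card => x; rewrite !inE.
  by case: eqP => [->|]; rewrite ?hb ?andbF.
rewrite -(cards0 U); apply: eq_card => x; rewrite !inE.
by case: eqP => [->|]; rewrite ?hb ?andbF.
Qed.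

Section CmpCount.
Variables (T : finType) (e : rel T).
Hypotheses (esy : symmetric e) (eirr : irreflexive e)
  (enb : forall x, exists y, e x y)
  (ntr : forall x y z, ~~ e x y -> ~~ e y z -> ~~ e x z).

Let fg := forcing_good esy eirr enb ntr.
Let degT' := degT esy eirr enb ntr.
Let deg1' := deg1 esy eirr enb ntr.
Let deg2' := deg2 esy eirr enb ntr.

Lemma good_two X : good e X -> X != set0 -> #|X| != 1 -> #|X| == 2.
Proof.
move=> g; rewrite -cards_eq0; have := good_le2 g; lia.
Qed.

Lemma deg_two X : good e X -> #|X| == 2 -> tar_deg e (~: X) = 2.
Proof.
move=> g c; have [a [b [eab _ ->]]] := good_pair g c.
exact: deg2'.
Qed.

Definition L2 := #|[set X : {set T} | good e X && (#|X| == 2)]|.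

Lemma count_deg (P : pred nat) :
  #|[set S | skew_forcing e S && P (tar_deg e S)]| =
  P #|T| + #|[set y | P (#|nbhd e y|).+1]| + P 2 * L2.
Proof.
rewrite card_predC.
have -> : [set X | skew_forcing e (~: X) && P (tar_deg e (~: X))] =
          [set X | good e X && P (tar_deg e (~: X))].
  by apply/setP => X; rewrite !inE fg setCK.
have S1 := card_split (fun X : {set T} => good e X && P (tar_deg e (~: X)))
                      (fun X => X == set0).
have S2 := card_split
   (fun X : {set T} => (good e X && P (tar_deg e (~: X))) && ~~ (X == set0))
   (fun X => #|X| == 1).
simpl in S1, S2.
have A : #|[set X | (good e X && P (tar_deg e (~:X))) && (X == set0)]| = P #|T|.
  by rewrite card_pt /= setC0 degT' good0.
have B : #|[set X | ((good e X && P (tar_deg e (~:X))) && ~~ (X == set0)) &&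
            (#|X| == 1)]| = #|[set y | P (#|nbhd e y|).+1]|.
  have -> : [set X | ((good e X && P (tar_deg e (~:X))) && ~~ (X == set0)) &&
            (#|X| == 1)] = (@set1 T) @: [set y | P (#|nbhd e y|).+1].
    apply/setP => X; rewrite !inE; apply/idP/imsetP.
      case/andP => /andP [/andP [g p] _] /cards1P [y HX].
      by exists y; rewrite // inE -deg1' -HX.
    case=> y; rewrite inE => py ->.
    rewrite good1 deg1' py cards1 /= andbT.
    by apply/eqP => /setP /(_ y); rewrite !inE eqxx.
  by rewrite card_imset //; apply: set1_inj.
have C : #|[set X | ((good e X && P (tar_deg e (~:X))) && ~~ (X == set0)) &&
            ~~ (#|X| == 1)]| = P 2 * L2.
  case h2: (P 2); rewrite ?mul1n ?mul0n.
    apply: eq_card => X; rewrite !inE.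
    case g: (good e X) => //=; apply/idP/idP.
      by case/andP => /andP [_ n0] n1; apply: good_two.
    move=> c2; rewrite deg_two // h2 /= -cards_eq0 (eqP c2) //.
  apply/eqP; rewrite cards_eq0; apply/eqP/setP => X; rewrite !inE.
  apply/negbTE; apply/negP => /andP [/andP [/andP [g p] n0] n1].
  by move: p; rewrite deg_two ?h2 //; apply: good_two.
rewrite S1 A S2 B C; lia.
Qed.

End CmpCount.

Lemma deg_le (T : finType) (e : rel T) S : tar_deg e S <= #|T|.
Proof.
rewrite /tar_deg -cardsT.
apply: leq_trans (leq_imset_card (fun x => symdiff S [set x]) setT).
apply: subset_leq_card; apply/subsetP => S'; rewrite inE => /and3P [_ _ /cards1P [x H]].
by apply/imsetP; exists x; rewrite // -H symdiffK.
Qed.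

Section Iso.
Variables (U W : finType) (e' : rel U) (e : rel W) (f : {set U} -> {set W}).
Hypotheses (finj : {in tar_vertices e' &, injective f})
  (fim : f @: tar_vertices e' = tar_vertices e)
  (fadj : {in tar_vertices e' &, forall x y, tar_adj e' x y = tar_adj e (f x) (f y)}).

Lemma inV (T : finType) (r : rel T) S : (S \in tar_vertices r) = skew_forcing r S.
Proof. by rewrite inE. Qed.

Lemma fV S : skew_forcing e' S -> skew_forcing e (f S).
Proof. by move=> h; rewrite -inV -fim; apply: imset_f; rewrite inV. Qed.

Lemma fVinv S2 : skew_forcing e S2 -> exists2 S, skew_forcing e' S & S2 = f S.
Proof. by rewrite -inV -fim => /imsetP [S]; rewrite inV; exists S. Qed.

Lemma iso_deg S : skew_forcing e' S -> tar_deg e (f S) = tar_deg e' S.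
Proof.
move=> fS; rewrite /tar_deg.
have -> : [set S2 | tar_adj e (f S) S2] = f @: [set S1 | tar_adj e' S S1].
  apply/setP => S2; rewrite inE; apply/idP/imsetP.
    move=> a; have /and3P [_ f2 _] := a; have [S1 f1 E] := fVinv f2.
    by exists S1; rewrite // inE fadj ?inV // -E.
  by case=> S1; rewrite inE => a ->; have /and3P [_ f1 _] := a; rewrite -fadj ?inV.
rewrite card_in_imset // => x y; rewrite !inE => /and3P [_ fx _] /and3P [_ fy _].
by apply: finj; rewrite inV.
Qed.

Lemma iso_count (P : pred nat) :
  #|[set S | skew_forcing e' S && P (tar_deg e' S)]| =
  #|[set S | skew_forcing e S && P (tar_deg e S)]|.
Proof.
have -> : [set S | skew_forcing e S && P (tar_deg e S)] =
          f @: [set S | skew_forcing e' S && P (tar_deg e' S)].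
  apply/setP => S2; rewrite inE; apply/idP/imsetP.
    case/andP => f2 p; have [S1 f1 E] := fVinv f2.
    by exists S1; rewrite // inE f1 -iso_deg // -E.
  case=> S1; rewrite inE => /andP [f1 p] ->.
  by rewrite fV // iso_deg.
rewrite card_in_imset // => x y; rewrite !inE => /andP [fx _] /andP [fy _].
by apply: finj; rewrite inV.
Qed.

End Iso.

Lemma card_bij (U W : finType) (C : {set U}) (D : {set W}) (w0 : W) :
  #|C| = #|D| -> exists h : U -> W, {in C &, injective h} /\ h @: C = D.
Proof.
move=> cCD.
pose h x := nth w0 (enum D) (index x (enum C)).
have szC : forall x, x \in C -> index x (enum C) < size (enum D).
  by move=> x xC; rewrite -cardE -cCD cardE index_mem mem_enum.
have hD : forall x, x \in C -> h x \in D.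
  by move=> x xC; rewrite -mem_enum; apply: mem_nth; apply: szC.
have hinj : {in C &, injective h}.
  move=> x y xC yC /eqP; rewrite /h nth_uniq ?enum_uniq ?szC // => /eqP E.
  have ex : nth x (enum C) (index x (enum C)) = x by apply: nth_index; rewrite mem_enum.
  have ey : nth x (enum C) (index y (enum C)) = y by apply: nth_index; rewrite mem_enum.
  by rewrite -ex -ey E.
exists h; split => //.
apply/eqP; rewrite eqEcard card_in_imset // cCD leqnn andbT.
by apply/subsetP => w /imsetP [x xC ->]; apply: hD.
Qed.

Section Eqv.
Variables (U : finType) (r : rel U).
Hypotheses (rr : reflexive r) (rs : symmetric r) (rt : transitive r).

Lemma cl_in (A : {set U}) x0 x : x \in [set y in A | r x0 y] ->
  [set y in A | r x y] = [set y in A | r x0 y].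
Proof.
rewrite inE => /andP [_ rx]; apply/setP => y; rewrite !inE.
case: (y \in A) => //=; apply/idP/idP => h.
  exact: rt rx h.
by apply: rt h; rewrite rs.
Qed.

Lemma cl_out (A : {set U}) x0 x : x \in A -> x \notin [set y in A | r x0 y] ->
  [set y in A :\: [set y in A | r x0 y] | r x y] = [set y in A | r x y].
Proof.
move=> xA xC; apply/setP => y; rewrite !inE.
case yA: (y \in A) => //=; rewrite andbT.
case rxy: (r x y); rewrite ?andbF ?andbT //.
apply/negP => rx0y; move: xC; rewrite inE.
by rewrite xA /= (rt rx0y) // rs.
Qed.

Lemma class_remove (A : {set U}) x0 k :
  #|[set x in A :\: [set y in A | r x0 y] |
      #|[set y in A :\: [set y in A | r x0 y] | r x y]| == k]| =
  #|[set x in A | #|[set y in A | r x y]| == k]| -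
    (k == #|[set y in A | r x0 y]|) * #|[set y in A | r x0 y]|.
Proof.
have hin : forall x, x \in [set y in A | r x0 y] ->
  [set y in A | r x y] = [set y in A | r x0 y] by move=> x; apply: cl_in.
have hout := @cl_out A x0.
have CA : [set y in A | r x0 y] \subset A by apply/subsetP => x; rewrite inE => /andP [].
move: hin hout CA; move: [set y in A | r x0 y] => C hin hout CA.
have -> : [set x in A :\: C | #|[set y in A :\: C | r x y]| == k] =
   [set x in A | #|[set y in A | r x y]| == k] :\: C.
  apply/setP => x; rewrite !in_set.
  case xC: (x \in C) => //=.
  by case xA: (x \in A) => //=; rewrite hout ?xC.
rewrite cardsD; congr (_ - _).
case hk: (k == #|C|); rewrite ?mul1n ?mul0n.
  rewrite (setIidPr _) //; apply/subsetP => x xC.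
  by rewrite in_set (subsetP CA) //= hin // eq_sym hk.
apply/eqP; rewrite cards_eq0; apply/eqP/setP => x; rewrite in_setI in_set in_set0.
case xC: (x \in C); rewrite ?andbF ?andbT //.
by rewrite hin // eq_sym hk andbF.
Qed.

End Eqv.

Lemma card_in0 (U : finType) (p : pred U) : #|[set x in (set0 : {set U}) | p x]| = 0.
Proof. by apply: eq_card0 => x; rewrite !inE. Qed.

Lemma eqv_iso (U W : finType) (r : rel U) (s : rel W) (w0 : W) :
  reflexive r -> symmetric r -> transitive r ->
  reflexive s -> symmetric s -> transitive s ->
  forall (A : {set U}) (B : {set W}),
  (forall k, #|[set x in A | #|[set y in A | r x y]| == k]| =
             #|[set x in B | #|[set y in B | s x y]| == k]|) ->
  exists f : U -> W, [/\ {in A &, injective f}, f @: A = B &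
     {in A &, forall x y, r x y = s (f x) (f y)}].
Proof.
move=> rr rs rt sr ss st A.
have [m leAm] := ubnP #|A|; elim: m A leAm => // m IH A leAm B cnt.
case: (set_0Vmem A) => [A0|[x0 Ax0]].
  exists (fun _ => w0); split.
  - by move=> x y; rewrite A0 inE.
  - rewrite A0 imset0; apply/esym/eqP; rewrite -subset0; apply/subsetP => y By.
    have c1 : 0 < #|[set x in B | #|[set y0 in B | s x y0]| == #|[set y' in B | s y y']|]|.
      by apply/card_gt0P; exists y; rewrite inE By eqxx.
    by rewrite -cnt A0 card_in0 in c1.
  - by move=> x y; rewrite A0 inE.
set C := [set y in A | r x0 y].
have x0C : x0 \in C by rewrite inE Ax0 rr.
have CA : C \subset A by apply/subsetP => x; rewrite inE => /andP [].
have : 0 < #|[set x in B | #|[set y in B | s x y]| == #|C|]|.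
  by rewrite -cnt; apply/card_gt0P; exists x0; rewrite inE Ax0 /=.
case/card_gt0P => y0; rewrite inE => /andP [By0 /eqP cD].
set D := [set y in B | s y0 y] in cD.
have DB : D \subset B by apply/subsetP => x; rewrite inE => /andP [].
have ltA : #|A :\: C| < m.
  have : #|A :\: C| < #|A|.
    rewrite cardsD (setIidPr CA); have : 0 < #|C| by apply/card_gt0P; exists x0.
    have := subset_leq_card CA; lia.
  lia.
have cntAB : forall k, #|[set x in A :\: C | #|[set y in A :\: C | r x y]| == k]| =
             #|[set x in B :\: D | #|[set y in B :\: D | s x y]| == k]|.
  by move=> k; rewrite (class_remove rs rt) (class_remove ss st) cnt cD.
have [f0 [f0inj f0im f0r]] := IH _ ltA _ cntAB.
have [h [hinj him]] := card_bij w0 (esym cD).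
have hD : forall x, x \in C -> h x \in D by move=> x xC; rewrite -him imset_f.
have f0B : forall x, x \in A :\: C -> f0 x \in B :\: D.
  by move=> x xAC; rewrite -f0im imset_f.
exists (fun x => if x \in C then h x else f0 x); split.
- move=> x y xA yA /=.
  case xC: (x \in C); case yC: (y \in C).
  + exact: hinj.
  + move=> E; have := f0B y; rewrite inE yC yA => /(_ isT); rewrite -E inE hD //.
  + move=> E; have := f0B x; rewrite inE xC xA => /(_ isT); rewrite E inE hD //.
  + by apply: f0inj; rewrite inE ?xC ?yC.
- apply/setP => w; apply/imsetP/idP.
    case=> x xA ->; case xC: (x \in C).
      by apply: (subsetP DB); apply: hD.
    by have := f0B x; rewrite inE xC xA => /(_ isT); rewrite inE => /andP [].
  move=> wB; case wD: (w \in D).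
    by move: wD; rewrite -him => /imsetP [x xC ->]; exists x; rewrite ?xC // (subsetP CA).
  have : w \in f0 @: (A :\: C) by rewrite f0im inE wD.
  case/imsetP => x; rewrite inE => /andP [xC xA] ->.
  by exists x; rewrite // (negbTE xC).
- move=> x y xA yA /=.
  have key1 : forall a b, a \in C -> b \in A -> r a b = (b \in C).
    move=> a b aC bA; have E : [set y in A | r a y] = C := cl_in rs rt aC.
    by rewrite -E inE bA.
  have key2 : forall a b, a \in D -> b \in B -> s a b = (b \in D).
    move=> a b aD bB; have E : [set y in B | s a y] = D := cl_in ss st aD.
    by rewrite -E inE bB.
  case xC: (x \in C); case yC: (y \in C).
  + by rewrite key1 // key2 ?hD // (subsetP DB) ?hD.
  + have := f0B y; rewrite inE yC yA => /(_ isT); rewrite inE => /andP [nD fB].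
    by rewrite key1 // yC key2 ?hD // (negbTE nD).
  + have := f0B x; rewrite inE xC xA => /(_ isT); rewrite inE => /andP [nD fB].
    by rewrite rs ss key1 // xC key2 ?hD // (negbTE nD).
  + by apply: f0r; rewrite inE ?xC ?yC.
Qed.

Lemma core4 (T : finType) (p q r s : {set T}) :
  #|p| = 1 -> #|r| = 1 -> #|q| = 2 -> #|s| = 2 ->
  #|symdiff p q| == 1 -> #|symdiff q r| == 1 ->
  #|symdiff r s| == 1 -> #|symdiff s p| == 1 -> p != r -> q = s.
Proof.
move=> cp cr cq cs pq qr rs sp npr.
have spq : p \subset q by apply: symdiff_sub; rewrite // cp cq.
have srq : r \subset q by apply: symdiff_sub; [rewrite symdiff_sym | rewrite cr cq].
have srs : r \subset s by apply: symdiff_sub; rewrite // cr cs.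
have sps : p \subset s by apply: symdiff_sub; [rewrite symdiff_sym | rewrite cp cs].
have cpr : #|p :|: r| = 2.
  move/eqP/cards1P: cp => [a pa]; move/eqP/cards1P: cr => [b rb].
  have ab : a != b by apply: contra npr => /eqP ab; rewrite pa rb ab.
  by rewrite pa rb cards2 ab.
have e1 : p :|: r = q.
  by apply/eqP; rewrite eqEcard cpr cq leqnn andbT subUset spq srq.
have e2 : p :|: r = s.
  by apply/eqP; rewrite eqEcard cpr cs leqnn andbT subUset sps srs.
by rewrite -e1 -e2.
Qed.


Section C4.
Variables (T : finType) (e : rel T).
Hypotheses (esy : symmetric e) (eirr : irreflexive e)
  (enb : forall x, exists y, e x y)
  (ntr : forall x y z, ~~ e x y -> ~~ e y z -> ~~ e x z).

Let fg := forcing_good esy eirr enb ntr.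

Lemma adj_info S S' : tar_adj e S S' ->
  [/\ #|~: S| <= 2, #|~: S'| <= 2 & #|symdiff (~: S) (~: S')| == 1].
Proof.
rewrite /tar_adj !fg symdiffC => /and3P [g1 g2 h].
by split; [apply: good_le2 g1 | apply: good_le2 g2 | ].
Qed.

Lemma c4_setT a b c d : tar_adj e a b -> tar_adj e b c -> tar_adj e c d ->
  tar_adj e d a -> a != c -> b != d ->
  [|| a == setT, b == setT, c == setT | d == setT].
Proof.
move=> /adj_info [ha hb ab] /adj_info [_ hc bc] /adj_info [_ hd cd] /adj_info [_ _ da].
move=> nac nbd.
apply/negPn/negP; rewrite !negb_or => /and4P [na nb nc nd].
have ne : forall S : {set T}, S != setT -> 0 < #|~: S|.
  move=> S nS; rewrite card_gt0; apply/negP => /eqP h.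
  by move: nS; rewrite -[S]setCK h setC0 eqxx.
have := ne _ na; have := ne _ nb; have := ne _ nc; have := ne _ nd.
move=> h4 h3 h2 h1.
have ca := symdiff_card ab; have cb := symdiff_card bc; have cc := symdiff_card cd.
have cd' := symdiff_card da.
have nac' : ~: a != ~: c by apply: contra nac => /eqP /setC_inj ->.
have nbd' : ~: b != ~: d by apply: contra nbd => /eqP /setC_inj ->.
case: (ltnP #|~: a| 2) => hA.
  have Ea : #|~: a| = 1 by lia.
  have Eb : #|~: b| = 2 by lia.
  have Ec : #|~: c| = 1 by lia.
  have Ed : #|~: d| = 2 by lia.
  by move: nbd'; rewrite (core4 Ea Ec Eb Ed ab bc cd da nac') eqxx.
have Ea : #|~: a| = 2 by lia.
have Eb : #|~: b| = 1 by lia.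
have Ec : #|~: c| = 2 by lia.
have Ed : #|~: d| = 1 by lia.
by move: nac'; rewrite (core4 Eb Ed Ec Ea bc cd da ab nbd') eqxx.
Qed.


End C4.

Lemma adjX (T : finType) (e : rel T) (X Y : {set T}) w :
  skew_forcing e (~: X) -> skew_forcing e (~: Y) -> symdiff X Y = [set w] ->
  tar_adj e (~: X) (~: Y).
Proof. by rewrite /tar_adj symdiffC => -> -> ->; rewrite cards1. Qed.

Section NtrIso.
Variables (U W : finType) (e' : rel U) (e : rel W) (f : {set U} -> {set W}).
Hypotheses (esy' : symmetric e') (eirr' : irreflexive e')
  (enb' : forall x, exists y, e' x y).
Hypotheses (esy : symmetric e) (eirr : irreflexive e)
  (enb : forall x, exists y, e x y)
  (ntr : forall x y z, ~~ e x y -> ~~ e y z -> ~~ e x z).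
Hypotheses (finj : {in tar_vertices e' &, injective f})
  (fim : f @: tar_vertices e' = tar_vertices e)
  (fadj : {in tar_vertices e' &, forall x y, tar_adj e' x y = tar_adj e (f x) (f y)}).

Lemma ntr_iso x y z : ~~ e' x y -> ~~ e' y z -> ~~ e' x z.
Proof.
move=> nxy nyz; apply/negP => exz.
have ezx : e' z x by rewrite esy'.
have nezy : ~~ e' z y by rewrite esy'.
have xy : (x == y) = false.
  by apply/negbTE/eqP => xy; rewrite -xy exz in nyz.
have xz : (x == z) = false.
  by apply/negbTE/eqP => xz; rewrite -xz eirr' in exz.
have yz : (y == z) = false.
  by apply/negbTE/eqP => yz; rewrite yz exz in nxy.
have F1 : skew_forcing e' (~: set0) by rewrite setC0; apply: forcingT.
have F2 := forcing1 esy' enb' x.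
have F3 : skew_forcing e' (~: [set x; y]) := forcing2 esy' enb' ezx nezy.
have F4 := forcing1 esy' enb' y.
have G1 := forcing1 esy' enb' z.
have G2 : skew_forcing e' (~: [set x; z]).
  by apply: (forcing2 esy' enb' ezx); rewrite eirr'.
have G3 : skew_forcing e' (~: (z |: [set x; y])) := forcing3 esy' eirr' enb' ezx nezy nxy.
have G4 : skew_forcing e' (~: [set z; y]) := forcing2 esy' enb' exz nxy.
have A12 : tar_adj e' (~: set0) (~: [set x]).
  by apply: (adjX (w := x)) => //; apply/setP => t; rewrite !inE; eqcase.
have A23 : tar_adj e' (~: [set x]) (~: [set x; y]).
  by apply: (adjX (w := y)) => //; apply/setP => t; rewrite !inE; eqcase.
have A34 : tar_adj e' (~: [set x; y]) (~: [set y]).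
  by apply: (adjX (w := x)) => //; apply/setP => t; rewrite !inE; eqcase.
have A41 : tar_adj e' (~: [set y]) (~: set0).
  by apply: (adjX (w := y)) => //; apply/setP => t; rewrite !inE; eqcase.
have B12 : tar_adj e' (~: [set z]) (~: [set x; z]).
  by apply: (adjX (w := x)) => //; apply/setP => t; rewrite !inE; eqcase.
have B23 : tar_adj e' (~: [set x; z]) (~: (z |: [set x; y])).
  by apply: (adjX (w := y)) => //; apply/setP => t; rewrite !inE; eqcase.
have B34 : tar_adj e' (~: (z |: [set x; y])) (~: [set z; y]).
  by apply: (adjX (w := x)) => //; apply/setP => t; rewrite !inE; eqcase.
have B41 : tar_adj e' (~: [set z; y]) (~: [set z]).
  by apply: (adjX (w := y)) => //; apply/setP => t; rewrite !inE; eqcase.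
have V : forall S, skew_forcing e' S -> S \in tar_vertices e' by move=> S; rewrite inE.
have fa : forall S S', skew_forcing e' S -> skew_forcing e' S' ->
    tar_adj e' S S' -> tar_adj e (f S) (f S').
  by move=> S S' h1 h2; rewrite fadj ?V.
have fn : forall S S', skew_forcing e' S -> skew_forcing e' S' ->
    S != S' -> f S != f S'.
  by move=> S S' h1 h2; apply: contra => /eqP /finj; rewrite !V // => /(_ isT isT) ->.
have C1 := c4_setT esy eirr enb ntr (fa _ _ F1 F2 A12) (fa _ _ F2 F3 A23)
  (fa _ _ F3 F4 A34) (fa _ _ F4 F1 A41).
have C2 := c4_setT esy eirr enb ntr (fa _ _ G1 G2 B12) (fa _ _ G2 G3 B23)
  (fa _ _ G3 G4 B34) (fa _ _ G4 G1 B41).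
have n1 : f (~: set0) != f (~: [set x; y]).
  by apply: fn => //; apply/eqP => /setP /(_ x); rewrite !inE eqxx.
have n2 : f (~: [set x]) != f (~: [set y]).
  by apply: fn => //; apply/eqP => /setP /(_ x); rewrite !inE eqxx xy.
have n3 : f (~: [set z]) != f (~: (z |: [set x; y])).
  by apply: fn => //; apply/eqP => /setP /(_ x); rewrite !inE eqxx xz xy.
have n4 : f (~: [set x; z]) != f (~: [set z; y]).
  by apply: fn => //; apply/eqP => /setP /(_ x); rewrite !inE eqxx xz xy.
have [Sa [fSa Sat zSa]] : exists S, [/\ skew_forcing e' S, f S = setT & z \in S].
  move: (C1 n1 n2) => /or4P [] /eqP h; [exists (~: set0) | exists (~: [set x])
    | exists (~: [set x; y]) | exists (~: [set y])]; split => //;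
    rewrite !inE; eqcase; done.
have [Sb [fSb Sbt zSb]] : exists S, [/\ skew_forcing e' S, f S = setT & z \notin S].
  move: (C2 n3 n4) => /or4P [] /eqP hS; [exists (~: [set z]) | exists (~: [set x; z])
    | exists (~: (z |: [set x; y])) | exists (~: [set z; y])]; split => //;
    rewrite !inE; eqcase; done.
have : Sa = Sb by apply: finj; rewrite ?V // Sat Sbt.
by move=> E; move: zSb; rewrite -E zSa.
Qed.

End NtrIso.

Section K.
Variables (t : nat) (n : 'I_t -> nat).
Hypotheses (ht : 2 <= t) (hn : forall i, 0 < n i).

Lemma K_sym : symmetric (kmp_adj n).
Proof. by move=> x y; rewrite /kmp_adj eq_sym. Qed.

Lemma K_irr : irreflexive (kmp_adj n).
Proof. by move=> x; rewrite /kmp_adj eqxx. Qed.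

Lemma K_ntr x y z : ~~ kmp_adj n x y -> ~~ kmp_adj n y z -> ~~ kmp_adj n x z.
Proof. by rewrite /kmp_adj !negbK => /eqP -> /eqP ->. Qed.

Definition Kv (j : 'I_t) : kmp_vertex n := Tagged (fun i => 'I_(n i)) (Ordinal (hn j)).

Lemma K_nb x : exists y, kmp_adj n x y.
Proof.
have o0 : 0 < t by apply: leq_trans ht.
pose j0 : 'I_t := Ordinal o0. pose j1 : 'I_t := Ordinal ht.
case: (tag x =P j0) => h.
  by exists (Kv j1); rewrite /kmp_adj /= h.
by exists (Kv j0); rewrite /kmp_adj /=; apply/eqP.
Qed.

Lemma K_card : #|kmp_vertex n| = \sum_(i < t) n i.
Proof.
rewrite /kmp_vertex card_tagged sumnE big_map big_enum /=.
by apply: eq_bigr => i _; rewrite card_ord.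
Qed.

Lemma K_part (i : 'I_t) : #|[set y : kmp_vertex n | tag y == i]| = n i.
Proof.
have -> : [set y : kmp_vertex n | tag y == i] =
    (fun j : 'I_(n i) => (Tagged (fun i => 'I_(n i)) j : kmp_vertex n)) @: setT.
  apply/setP => y; rewrite inE; apply/idP/imsetP.
    by case: y => i' j /= /eqP E; subst i'; exists j.
  by case=> j _ ->.
rewrite card_imset ?cardsT ?card_ord // => a b E.
have := congr1 (tagged_as (Tagged (fun i => 'I_(n i)) a)) E.
by rewrite !tagged_asE.
Qed.

Lemma K_deg1 y : #|nbhd (kmp_adj n) y| = #|kmp_vertex n| - n (tag y).
Proof.
have := cardsC (nbhd (kmp_adj n) y).
have -> : ~: nbhd (kmp_adj n) y = [set y' : kmp_vertex n | tag y' == tag y].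
  by apply/setP => z; rewrite !inE /kmp_adj negbK eq_sym.
rewrite K_part; lia.
Qed.

End K.

Lemma clcount (T : finType) (e : rel T) k :
  #|[set x in [set: T] | #|[set y in [set: T] | ~~ e x y]| == k]| =
  if k <= #|T| then #|[set x | #|nbhd e x| == #|T| - k]| else 0.
Proof.
have cl : forall x, #|[set y in [set: T] | ~~ e x y]| = #|T| - #|nbhd e x|.
  move=> x; have := cardsC (nbhd e x).
  have -> : ~: nbhd e x = [set y in [set: T] | ~~ e x y] by apply/setP => y; rewrite !inE.
  lia.
have le : forall x, #|nbhd e x| <= #|T| by move=> x; apply: max_card.
case: leqP => hk.
  apply: eq_card => x; rewrite !inE cl; have := le x.
  by move=> h; apply/eqP/eqP; lia.
apply: eq_card0 => x; rewrite !inE cl; have := le x.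
by move=> h; apply/eqP; lia.
Qed.

Section Min.
Variables (T : finType) (e : rel T).
Hypotheses (esy : symmetric e) (eirr : irreflexive e)
  (enb : forall x, exists y, e x y)
  (ntr : forall x y z, ~~ e x y -> ~~ e y z -> ~~ e x z).
Variable x0 : T.

Let fg := forcing_good esy eirr enb ntr.

Lemma card_ge2 : 2 <= #|T|.
Proof.
have [y exy] := enb x0.
have : x0 != y by apply/eqP => E; rewrite E eirr in exy.
by move=> h; have := max_card (mem [set x0; y]); rewrite cards2 h.
Qed.

Lemma min_char S : minset (skew_forcing e) S <-> exists u v, e u v /\ S = ~: [set u; v].
Proof.
split.
  case/minsetP => fS minS.
  have g : good e (~: S) by rewrite -fg.
  case c2: (#|~: S| == 2).
    have [a [b [eab _ E]]] := good_pair g c2.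
    by exists a, b; split => //; rewrite -E setCK.
  have le1 : #|~: S| <= 1 by move: (good_le2 g) c2; case: (#|~: S|) => [|[|[|]]].
  have [y sy] : exists y, ~: S \subset [set y].
    case: (set_0Vmem (~: S)) => [E|[y yS]].
      by exists x0; rewrite E sub0set.
    exists y; apply/subsetP => z zS; rewrite inE; apply/negPn/negP => zy.
    have : [set y; z] \subset ~: S by rewrite subUset !sub1set yS zS.
    move/subset_leq_card; rewrite cards2 eq_sym zy; lia.
  have [u eyu] := enb y.
  have fB : skew_forcing e (~: [set y; u]) by rewrite fg setCK good2.
  have sB : ~: [set y; u] \subset S.
    by rewrite -[S]setCK setCS; apply: subset_trans sy _; rewrite sub1set !inE eqxx.
  have := minS _ fB sB => E; move: le1; rewrite -E setCK cards2.
  by case: eqP => // yu; rewrite yu eirr in eyu.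
case=> u [v [euv ->]].
have g : good e [set u; v] by apply: good2.
apply/minsetP; split; first by rewrite fg setCK.
move=> B fB sB; have gB : good e (~: B) by rewrite -fg.
apply: setC_inj; apply/eqP; rewrite eq_sym eqEcard -setCS !setCK sB /=.
have := good_le2 gB; rewrite cards2.
by case: eqP => // uv; rewrite uv eirr in euv.
Qed.

End Min.

Lemma setTDD (T : finType) (u v : T) : setT :\ u :\ v = ~: [set u; v].
Proof. by apply/setP => x; rewrite !inE negb_or andbT andbC. Qed.

Unset Implicit Arguments.

Theorem theorem5p2 (t : nat) (n : 'I_t -> nat)
    (ht : 2 <= t) (hn : forall i, 0 < n i) :
  let N := \sum_(i < t) n i in
  (forall S : {set kmp_vertex n},
     minset (skew_forcing (kmp_adj n)) S <->
     exists u v : kmp_vertex n, tag u != tag v /\ S = setT :\ u :\ v) /\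
  (forall S : {set kmp_vertex n},
     (skew_forcing (kmp_adj n) S /\ #|S| = N - 2) <->
     minset (skew_forcing (kmp_adj n)) S) /\
  (forall S : {set kmp_vertex n},
     minset (skew_forcing (kmp_adj n)) S -> tar_deg (kmp_adj n) S = 2) /\
  (forall (i : 'I_t) (y : kmp_vertex n), tag y = i ->
     skew_forcing (kmp_adj n) (setT :\ y) /\
     tar_deg (kmp_adj n) (setT :\ y) = N - n i + 1) /\
  (forall (T' : finType) (e' : rel T'),
     symmetric e' -> irreflexive e' -> (forall x, exists y, e' x y) ->
     tar_iso e' (kmp_adj n) -> graph_iso e' (kmp_adj n)).
Proof.
move=> N.
have hN : N = #|kmp_vertex n| by rewrite /N K_card.
have esy := @K_sym t n; have eirr := @K_irr t n; have enb := K_nb ht hn.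
have ntr := @K_ntr t n.
pose x0 := Kv hn (Ordinal (ltnW ht)).
have fg := forcing_good esy eirr enb ntr.
have mc := min_char esy eirr enb ntr x0.
have c2 := card_ge2 eirr enb x0.
have P1 : forall S : {set kmp_vertex n},
     minset (skew_forcing (kmp_adj n)) S <->
     exists u v : kmp_vertex n, tag u != tag v /\ S = setT :\ u :\ v.
  move=> S; rewrite mc; split => -[u [v [h E]]]; exists u, v.
    by rewrite setTDD.
  by rewrite -setTDD.
split => //; split.
  move=> S; split.
    case=> fS cS; apply/mc.
    have g : good (kmp_adj n) (~: S) by rewrite -fg.
    have c : #|~: S| == 2 by have := cardsC S; rewrite -hN; lia.
    have [a [b [eab _ E]]] := good_pair g c.
    by exists a, b; split => //; rewrite -E setCK.
  move=> mS; split; first by case/minsetP: mS.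
  case/mc: mS => u [v [euv ->]].
  have := cardsC (~: [set u; v]); rewrite setCK cards2 hN.
  by case: eqP => [uv|_]; [rewrite uv eirr in euv | lia].
split.
  by move=> S /mc [u [v [euv ->]]]; apply: deg2.
split.
  move=> i y <-; rewrite (_ : setT :\ y = ~: [set y]); last by rewrite setTD.
  split; first exact: forcing1.
  by rewrite (deg1 esy eirr enb ntr) (K_deg1 ht) -hN addn1.
move=> T' e' esy' eirr' enb' [f [finj fim fadj]].
have ntr' := ntr_iso esy' eirr' enb' esy eirr enb ntr finj fadj.
have cnt := iso_count finj fim fadj.
have F' := count_deg esy' eirr' enb' ntr'.
have F := count_deg esy eirr enb ntr.
have dgt : forall (U : finType) (r : rel U) d,
    0 < #|[set S | skew_forcing r S && (tar_deg r S == d)]| -> d <= #|U|.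
  move=> U r d /card_gt0P [S]; rewrite inE => /andP [_ /eqP <-]; apply: deg_le.
have eN : #|T'| = #|kmp_vertex n|.
  apply/eqP; rewrite eqn_leq; apply/andP; split.
    apply: (dgt _ (kmp_adj n)).
    have h1 := cnt (fun d => d == #|T'|); have h2 := F' (fun d => d == #|T'|).
    simpl in h1, h2; rewrite -h1 h2 eqxx; lia.
  apply: (dgt _ e').
  have h1 := cnt (fun d => d == #|kmp_vertex n|).
  have h2 := F (fun d => d == #|kmp_vertex n|).
  simpl in h1, h2; rewrite h1 h2 eqxx; lia.
have eL : L2 e' = L2 (kmp_adj n).
  have h1 := cnt (fun _ => true); have h2 := F' (fun _ => true).
  have h3 := F (fun _ => true); simpl in h1, h2, h3.
  have cT : forall U : finType, #|[set y : U | true]| = #|U|.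
    by move=> U; apply: eq_card => y; rewrite inE.
  rewrite !cT eN in h2 h3; lia.
have eD : forall j, #|[set y | #|nbhd e' y| == j]| =
                    #|[set y | #|nbhd (kmp_adj n) y| == j]|.
  move=> j; have h1 := cnt (fun d => d == j.+1); have h2 := F' (fun d => d == j.+1).
  have h3 := F (fun d => d == j.+1); simpl in h1, h2, h3.
  rewrite eN eL in h2.
  by move: h1; rewrite h2 h3 => /addIn /addnI.
have r1 : reflexive (fun a b => ~~ e' a b) by move=> a /=; rewrite eirr'.
have r2 : symmetric (fun a b => ~~ e' a b) by move=> a b /=; rewrite esy'.
have r3 : transitive (fun a b => ~~ e' a b) by move=> b a c; apply: ntr'.
have s1 : reflexive (fun a b => ~~ kmp_adj n a b) by move=> a /=; rewrite eirr.
have s2 : symmetric (fun a b => ~~ kmp_adj n a b) by move=> a b /=; rewrite esy.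
have s3 : transitive (fun a b => ~~ kmp_adj n a b) by move=> b a c; apply: ntr.
have [g [ginj gim grel]] := eqv_iso x0 r1 r2 r3 s1 s2 s3 (A := setT) (B := setT)
  (fun k => ltac:(by rewrite !clcount eN eD)).
exists g; split => //.
by move=> a b aT bT; apply: negb_inj; apply: grel.
Qed.
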